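(* For all integers $n,f,k$ with $1\le k\le f\le n-1$, the task $k\text{-TAg}(n,f)$ is not $C$-reducible to $\mathrm{Cons}(n,n-1)$, and hence is not $C$-reducible to $\mathrm{Cons}(n,f)$.
   Context: Model: a finite set of processes runs an asynchronous algorithm communicating by reliable message passing with unbounded delays and speeds; processes fail only by crashing. Time is $\mathcal T=\mathbb N$; a failure pattern $F$ for $\Pi$ is a nondecreasing map $\mathcal T\to2^\Pi$, $Faulty(F)=\bigcup_tF(t)$. A binary agreement problem $P$ for $\Pi$ maps each $(F,\vec V)$, $\vec V\in\{0,1\}^\Pi$, to a nonempty $P(F,\vec V)\subseteq\{0,1\}$; a task is $T=(P,f)$. An algorithm solves $T$ if in every run with $|Faulty(F)|\le f$ and initial values $\vec V$: every correct process eventually decides, decisions are irrevocable, no two processes decide differently, and decisions lie in $P(F,\vec V)$. $k\text{-TAg}_\Pi(F,\vec V)=\{0\}$ if at least $k$ entries of $\vec V$ are $0$; $=\{1\}$ if $\vec V$ is all-ones and $|Faulty(F)|\le k-1$; $=\{0,1\}$ otherwise; $k\text{-TAg}(\Pi,f)=(k\text{-TAg}_\Pi,f)$; $k\text{-TAg}(n,f)$ and $\mathrm{Cons}(n,f)=n\text{-TAg}(n,f)$ are the versions for $\Pi=\{1,\dots,n\}$ ($\mathrm{Cons}(n,n-1)$ is wait-free binary Consensus). Oracles: for $T=(P,f)$ on $\Pi$, $\mathcal O.T$ is a black box with consultants $\Pi$; its history is a sequence of successive consultations, in each of which every consultant may submit at most one query in $\{0,1\}$ and the oracle returns a common response $d$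 with $d\in P(F,\vec V)$ for every $\vec V$ extending the partial query vector (the oracle may use the whole failure pattern, including future crashes), and every correct querier gets the response whenever at least $|\Pi|-f$ consultants query; $\mathcal O.T$ is the most general such oracle. $T_1\le_C T_2$ means there is an algorithm solving $T_1$ whose processes, besides message passing, may consult (repeatedly, waiting for each answer) the single oracle $\mathcal O.T_2$ (for a renamed copy of $T_2$ on the relevant processes). *)

(* Defs.v *)
From mathcomp Require Import all_boot.
From mathcomp Require Import boolp.

Set Implicit Arguments.
Unset Strict Implicit.
Unset Printing Implicit Defensive.

Definition failure_pattern (n : nat) := nat -> {set 'I_n}.

Definition fp_ok n (F : failure_pattern n) : Prop :=
  forall t t', t <= t' -> F t \subset F t'.

Definition faulty n (F : failure_pattern n) : {set 'I_n} :=
  [set p | `[< exists t, p \in F t >] ].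

Definition correct n (F : failure_pattern n) (p : 'I_n) : bool :=
  p \notin faulty F.

(* A binary agreement problem: [P F V d] means d \in P(F, V). *)
Definition problem (n : nat) :=
  failure_pattern n -> ('I_n -> bool) -> bool -> Prop.

Definition task (n : nat) := (problem n * nat)%type.

(* k-TAg_Pi (false = 0, true = 1). *)
Definition kTAg (n k : nat) : problem n := fun F V d =>
  if k <= #|[set p | ~~ V p]| then d = false
  else if [forall p, V p] && (#|faulty F| <= k - 1) then d = true
  else True.
Arguments kTAg : clear implicits.

Definition kTAg_task (n f k : nat) : task n := (kTAg n k, f).
Arguments kTAg_task : clear implicits.
Definition ConsT (n f : nat) : task n := kTAg_task n f n.
Arguments ConsT : clear implicits.

Inductive Input (n : nat) (M : Type) :=
| InNone
| InMsg (q : 'I_n) (m : M)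
| InResp (d : bool).

(* A step
   returns the new state, the messages sent (destination, content), and
   possibly a query (in {0,1}) submitted to the oracle.  [a_dec] reads the
   decision (if any) off the local state. *)
Record Algo (n : nat) := {
  St : Type;
  Msg : Type;
  a_init : 'I_n -> bool -> St;
  a_step : 'I_n -> St -> Input n Msg -> St * seq ('I_n * Msg) * option bool;
  a_dec : 'I_n -> St -> option bool
}.
Arguments St {n} a.
Arguments Msg {n} a.
Arguments a_init {n} a.
Arguments a_step {n} a.
Arguments a_dec {n} a.

(* Scheduled events: a null step, the receipt of the i-th message sent at
   time s (by q, with content m), or the receipt of the oracle response. *)
Inductive Event (n : nat) (M : Type) :=
| EvNone
| EvMsg (s i : nat) (q : 'I_n) (m : M)
| EvResp.

(* A run: at each time at most one process takes a step; [resp c] is the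
   common response of the oracle in its c-th consultation. *)
Record Run n (A : Algo n) := {
  sched : nat -> option ('I_n * Event n (Msg A));
  resp : nat -> bool
}.
Arguments sched {n A} r.
Arguments resp {n A} r.

Section Semantics.
Context (n : nat) (A : Algo n) (V : 'I_n -> bool) (R : Run A).

(* Global configuration: local states, number of queries submitted so far,
   and whether a query is pending (the process waits for its answer). *)
Record Cfg := {
  cst : 'I_n -> St A;
  cnq : 'I_n -> nat;
  cpend : 'I_n -> bool
}.

Definition input_of (c : Cfg) (p : 'I_n) (ev : Event n (Msg A)) : Input n (Msg A) :=
  match ev with
  | EvNone => InNone _ _
  | EvMsg _ _ q m => InMsg q m
  | EvResp => InResp _ _ (resp R (cnq c p).-1)
  end.

Fixpoint cfg (t : nat) : Cfg :=
  match t with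
  | 0 => {| cst := fun p => a_init A p (V p);
            cnq := fun _ => 0;
            cpend := fun _ => false |}
  | t'.+1 =>
    let c := cfg t' in
    match sched R t' with
    | None => c
    | Some (p, ev) =>
      let: (s', _, oq) := a_step A p (cst c p) (input_of c p ev) in
      let pend0 := match ev with EvResp => false | _ => cpend c p end in
      {| cst := fun q => if q == p then s' else cst c q;
         cnq := fun q => if (q == p) && isSome oq then (cnq c q).+1 else cnq c q;
         cpend := fun q => if q == p then pend0 || isSome oq else cpend c q |}
    end
  end.

Definition out (t : nat) : option ('I_n * (seq ('I_n * Msg A) * option bool)) :=
  match sched R t with
  | None => None
  | Some (p, ev) =>
    let c := cfg t in
    let: (_, ms, oq) := a_step A p (cst c p) (input_of c p ev) in
    Some (p, (ms, oq))
  end.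

(* The j-th query of a process belongs to the j-th consultation of the oracle
   (consultation indices start at 0). *)
Definition Queried (c : nat) (p : 'I_n) (b : bool) : Prop :=
  exists t ms, out t = Some (p, (ms, Some b)) /\ cnq (cfg t) p = c.

Definition GetsResp (c : nat) (p : 'I_n) (t : nat) : Prop :=
  sched R t = Some (p, @EvResp n (Msg A)) /\ cnq (cfg t) p = c.+1.

Definition dec_at (t : nat) (p : 'I_n) : option bool := a_dec A p (cst (cfg t) p).

(* Admissible runs of A with failure pattern F, consulting the most general
   oracle O.(PO, fO). *)
Definition Admissible (F : failure_pattern n) (PO : problem n) (fO : nat) : Prop :=
  (forall t p ev, sched R t = Some (p, ev) -> p \notin F t) /\
  (* a process with a pending query waits for its answer; the answer is only
     delivered to a process with a pending query *)
  (forall t p ev, sched R t = Some (p, ev) ->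
      cpend (cfg t) p = (if ev is EvResp then true else false)) /\
  (forall t p s i q m, sched R t = Some (p, EvMsg s i q m) ->
      s < t /\ exists ms oq, out s = Some (q, (ms, oq)) /\ onth ms i = Some (p, m)) /\
  (forall t t' p p' s i q q' m m',
      sched R t = Some (p, EvMsg s i q m) ->
      sched R t' = Some (p', EvMsg s i q' m') -> t = t') /\
  (* safety of the oracle: the common response d of a consultation satisfies
     d \in PO(F, W) for every W extending the partial query vector *)
  (forall c, (exists p t, GetsResp c p t) ->
      forall W : 'I_n -> bool, (forall p b, Queried c p b -> W p = b) ->
      PO F W (resp R c)) /\
  (forall p, correct F p -> forall t, ~~ cpend (cfg t) p ->
      exists t' ev, t <= t' /\ sched R t' = Some (p, ev)) /\
  (forall s q ms oq i p m, out s = Some (q, (ms, oq)) -> onth ms i = Some (p, m) ->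
      correct F p ->
      (exists t, sched R t = Some (p, EvMsg s i q m)) \/
      (exists t0, forall t, t0 <= t -> cpend (cfg t) p)) /\
  (forall c, n - fO <= #|[set p | `[< exists b, Queried c p b >] ]| ->
      forall p, correct F p -> (exists b, Queried c p b) ->
      exists t, GetsResp c p t).

End Semantics.

Definition Solves n (A : Algo n) (T T' : task n) : Prop :=
  forall F : failure_pattern n, fp_ok F -> #|faulty F| <= T.2 ->
  forall (V : 'I_n -> bool) (R : Run A), Admissible V R F T'.1 T'.2 ->
    (forall p, correct F p -> exists t d, dec_at V R t p = Some d) /\
    (forall p t t' d, t <= t' -> dec_at V R t p = Some d -> dec_at V R t' p = Some d) /\
    (forall p q t t' d d', dec_at V R t p = Some d -> dec_at V R t' q = Some d' -> d = d') /\
    (forall p t d, dec_at V R t p = Some d -> T.1 F V d).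

Definition Creducible n (T1 T2 : task n) : Prop :=
  exists A : Algo n, Solves A T1 T2.

(* Main.v *)
Require Import Defs.
From mathcomp Require Import all_boot boolp zify.
From Stdlib Require Import Classical ClassicalEpsilon.

Set Implicit Arguments.
Unset Strict Implicit.
Unset Printing Implicit Defensive.

Section Sim.
Variables (n : nat) (A : Algo n) (V : 'I_n -> bool) (S : {set 'I_n})
  (T0 : option nat) (Hn : 0 < n).

Notation M := (Msg A).
Definition OutT := option ('I_n * (seq ('I_n * M) * option bool)).

Record SS := { scf : Cfg A; slog : nat -> OutT; sdlv : nat -> nat -> bool;
               srm : nat -> option bool }.

Definition msgsL (lg : nat -> OutT) s : seq ('I_n * M) :=
  if lg s is Some (_, (ms, _)) then ms else [::].
Definition keysL (lg : nat -> OutT) t : seq (nat * nat) :=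
  flatten [seq [seq (s, i) | i <- iota 0 (size (msgsL lg s))] | s <- iota 0 t].
Definition rcvL (lg : nat -> OutT) (k : nat * nat) : option 'I_n :=
  if onth (msgsL lg k.1) k.2 is Some (p, _) then Some p else None.
Definition candP (lg : nat -> OutT) (dl : nat -> nat -> bool) (p : 'I_n) (k : nat * nat) :=
  (rcvL lg k == Some p) && ~~ dl k.1 k.2.
Definition mkev (lg : nat -> OutT) (k : nat * nat) : Event n M :=
  match lg k.1 with
  | Some (q, (ms, _)) =>
     match onth ms k.2 with Some (_, m) => EvMsg k.1 k.2 q m | None => EvNone _ _ end
  | None => EvNone _ _ end.

Definition stp t : 'I_n := Ordinal (ltn_pmod t Hn).
Definition allowed t (p : 'I_n) := (p \notin S) || (if T0 is Some T then T <= t else false).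

Definition chooseE (pd : 'I_n -> bool) lg dl t (p : 'I_n) : Event n M :=
  if pd p then EvResp _ _
  else let F := keysL lg t in
       if has (candP lg dl p) F then mkev lg (nth (0,0) F (find (candP lg dl p) F))
       else EvNone _ _.

Definition choose t (σ : SS) : option ('I_n * Event n M) :=
  if allowed t (stp t) then
    Some (stp t, chooseE (cpend (scf σ)) (slog σ) (sdlv σ) t (stp t))
  else None.

Definition dummyR (σ : SS) : Run A :=
  {| sched := fun _ => None; resp := fun c => odflt false (srm σ c) |}.

Definition stepSS t (σ : SS) : SS :=
   match choose t σ with None => σ
   | Some (p, ev) =>
     let c := scf σ in
     let: (s', ms, oq) := a_step A p (cst c p) (input_of (dummyR σ) c p ev) in
     let pend0 := match ev with EvResp => false | _ => cpend c p end in
     {| scf := {| cst := fun q => if q == p then s' else cst c q;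
                 cnq := fun q => if (q == p) && isSome oq then (cnq c q).+1 else cnq c q;
                 cpend := fun q => if q == p then pend0 || isSome oq else cpend c q |};
        slog := fun s => if s == t then Some (p, (ms, oq)) else slog σ s;
        sdlv := fun s i => match ev with
                | EvMsg s0 i0 _ _ => ((s == s0) && (i == i0)) || sdlv σ s i
                | _ => sdlv σ s i end;
        srm := fun c0 => if srm σ c0 is Some b then Some b else
               if oq is Some b then (if c0 == cnq c p then Some b else None) else None |}
   end.

Fixpoint sim t : SS := match t with
| 0 => {| scf := {| cst := fun p => a_init A p (V p); cnq := fun _ => 0; cpend := fun _ => false |};
          slog := fun _ => None; sdlv := fun _ _ => false; srm := fun _ => None |}
| t'.+1 => stepSS t' (sim t')
end.

Definition finresp c : bool :=
  epsilon (inhabits false) (fun b => exists t, srm (sim t) c = Some b).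

Definition run : Run A := {| sched := fun t => choose t (sim t); resp := finresp |}.

Lemma srm_mono t t' c b : t <= t' -> srm (sim t) c = Some b -> srm (sim t') c = Some b.
Proof.
move=> le; elim: t' le => [|t' IH]; first by rewrite leqn0 => /eqP->.
rewrite leq_eqVlt => /orP[/eqP->//|/IH H /H {}H] /=.
rewrite /stepSS; case: (choose t' _) => [[p ev]|] //.
by case: a_step => [[s' ms] oq] /=; rewrite H.
Qed.

Lemma srm_uniq t t' c b b' : srm (sim t) c = Some b -> srm (sim t') c = Some b' -> b = b'.
Proof.
move=> H H'; case: (leqP t t') => le.
  by move: (srm_mono le H); rewrite H' => -[].
by move: (srm_mono (ltnW le) H'); rewrite H => -[].
Qed.

Lemma finrespE t c b : srm (sim t) c = Some b -> finresp c = b.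
Proof.
move=> H; rewrite /finresp.
have [t' Ht'] := epsilon_spec (inhabits false) (fun b => exists t, srm (sim t) c = Some b)
   (ex_intro _ b (ex_intro _ t H)).
exact: srm_uniq Ht' H.
Qed.

Lemma pend_inv t p : cpend (scf (sim t)) p -> exists b, srm (sim t) (cnq (scf (sim t)) p).-1 = Some b.
Proof.
elim: t p => [//|t IH] p /=.
rewrite /stepSS; case E: (choose t _) => [[q ev]|]; last exact: IH.
case: a_step => [[s' ms] oq] /=.
case: eqP => [->|ne]; last first.
  move=> /IH [b Hb]; exists b; rewrite Hb; done.
have pend0: match ev with EvResp => false | _ => cpend (scf (sim t)) q end = false.
  move: E; rewrite /choose; case: allowed => // -[<- <-].
  rewrite /chooseE; case: ifP => [//|Hc].
  by case: has => //=; rewrite /mkev; case: (slog _ _) => [[? [? ?]]|] //=; case: onth => [[]|].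
rewrite pend0 /=; case: oq => [b|] //= _.
rewrite eqxx /=.
by case: (srm _ _) => [b'|]; [exists b' | exists b].
Qed.

Lemma cfgE t : cfg V run t = scf (sim t).
Proof.
elim: t => [//|t IH] /=.
rewrite IH /stepSS /=.
case E: (choose t (sim t)) => [[p ev]|] //.
have -> : input_of run (scf (sim t)) p ev = input_of (dummyR (sim t)) (scf (sim t)) p ev.
  case: ev E => //= E.
  move: E; rewrite /choose; case: allowed => // -[Ep].
  rewrite /chooseE; case: ifP => [Hp _|_]; last first.
    by case: has => //; rewrite /mkev; case: (slog _ _) => [[? [? ?]]|] //; case: onth => [[]|].
  rewrite Ep in Hp; have [b Hb] := pend_inv Hp.
  by rewrite Hb (finrespE Hb).
by case: a_step => [[s' ms] oq].
Qed.


Lemma choose_pend t σ p ev : choose t σ = Some (p, ev) ->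
  cpend (scf σ) p = (if ev is EvResp then true else false).
Proof.
rewrite /choose; case: allowed => // -[<- <-]; rewrite /chooseE.
case H: (cpend (scf σ) (stp t)) => //; case: has => //=; rewrite /mkev;
  case: (slog _ _) => [[? [? ?]]|] //=; case: onth => [[]|] //.
Qed.

Lemma inputE t p ev : choose t (sim t) = Some (p, ev) ->
  input_of run (scf (sim t)) p ev = input_of (dummyR (sim t)) (scf (sim t)) p ev.
Proof.
move=> E; have Hp := choose_pend E.
case: ev E Hp => //= E Hp.
have [b Hb] := pend_inv Hp.
by rewrite Hb (finrespE Hb).
Qed.

Lemma slog_none t s : t <= s -> slog (sim t) s = None.
Proof.
elim: t => [//|t IH] lt /=; rewrite /stepSS.
case: choose => [[p ev]|]; last exact: IH (ltnW lt).
case: a_step => [[s' ms] oq] /=.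
by rewrite (gtn_eqF lt) IH // ltnW.
Qed.

Lemma slog_stable t s : s < t -> slog (sim t) s = slog (sim s.+1) s.
Proof.
elim: t => [//|t IH]; rewrite ltnS leq_eqVlt => /orP[/eqP->//|lt] /=.
rewrite /stepSS; case: choose => [[p ev]|]; last exact: IH.
case: a_step => [[s' ms] oq] /=.
by rewrite (ltn_eqF lt) IH.
Qed.

Lemma outE t : out V run t = slog (sim t.+1) t.
Proof.
rewrite /out /= cfgE /stepSS.
case E: (choose t (sim t)) => [[p ev]|]; last by rewrite slog_none.
rewrite (inputE E).
by case: a_step => [[s' ms] oq] /=; rewrite eqxx.
Qed.

Lemma slogE t s : slog (sim t) s = if s < t then out V run s else None.
Proof.
case: ifP => lt; first by rewrite outE slog_stable.
by rewrite slog_none // leqNgt lt.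
Qed.

Lemma keysL_mem lg t k : (k \in keysL lg t) = (k.1 < t) && (k.2 < size (msgsL lg k.1)).
Proof.
case: k => s i /=; apply/flatten_mapP/andP => [[s0]|[H1 H2]].
  rewrite mem_iota /= => Hs0 /mapP [i0]; rewrite mem_iota /= => Hi0 [-> ->].
  by rewrite Hs0 Hi0.
exists s; first by rewrite mem_iota.
by apply/mapP; exists i => //; rewrite mem_iota.
Qed.

Lemma keysL_ext lg lg' t : (forall s, s < t -> lg s = lg' s) -> keysL lg t = keysL lg' t.
Proof.
move=> H; rewrite /keysL; congr flatten; apply/eq_in_map => s.
by rewrite mem_iota /= => Hs; rewrite /msgsL H.
Qed.

Lemma keysL_pref lg a t : a <= t -> exists r, keysL lg t = keysL lg a ++ r.
Proof.
move=> le; rewrite /keysL -(subnKC le) iotaD map_cat flatten_cat.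
by eexists.
Qed.

Lemma keys_sim t : keysL (slog (sim t)) t = keysL (out V run) t.
Proof. by apply: keysL_ext => s lt; rewrite slogE lt. Qed.

Lemma chooseE_msg pd lg dl t p s i q m :
  chooseE pd lg dl t p = EvMsg s i q m ->
  [/\ ~~ pd p, (s, i) \in keysL lg t, ~~ dl s i &
      exists ms oq, lg s = Some (q, (ms, oq)) /\ onth ms i = Some (p, m)].
Proof.
rewrite /chooseE; case: ifP => // Hpd; case: ifP => // Hh.
have Hf : find (candP lg dl p) (keysL lg t) < size (keysL lg t) by rewrite -has_find.
have kin := mem_nth (0,0) Hf.
have Pk := nth_find (0,0) Hh.
move: kin Pk; case: (nth _ _ _) => s0 i0 kin.
rewrite /candP /rcvL /mkev /msgsL /=.
case E: (lg s0) => [[q0 [ms0 oq0]]|] //=; case E2: (onth ms0 i0) => [[p0 m0]|] //=.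
move=> /andP[/eqP[Ep] Hd] [<- <- <- <-]; subst p0; split => //.
by exists ms0, oq0.
Qed.

Definition steps u p := if choose u (sim u) is Some (q, _) then q == p else false.

Lemma step_other t p : ~~ steps t p ->
  cnq (scf (sim t.+1)) p = cnq (scf (sim t)) p /\
  cpend (scf (sim t.+1)) p = cpend (scf (sim t)) p.
Proof.
rewrite /steps /= /stepSS; case: choose => [[q ev]|] // Hq.
by case: a_step => [[s' ms] oq] /=; rewrite eq_sym (negbTE Hq).
Qed.

Lemma nostep t0 t1 p : t0 <= t1 -> (forall u, t0 <= u < t1 -> ~~ steps u p) ->
  cnq (scf (sim t1)) p = cnq (scf (sim t0)) p /\
  cpend (scf (sim t1)) p = cpend (scf (sim t0)) p.
Proof.
elim: t1 => [|t1 IH]; first by rewrite leqn0 => /eqP->.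
rewrite leq_eqVlt => /orP[/eqP->//|lt] H.
rewrite ltnS in lt.
have [e1 e2] : (cnq (scf (sim t1.+1)) p = cnq (scf (sim t1)) p) /\ (cpend (scf (sim t1.+1)) p = cpend (scf (sim t1)) p).
  by apply: step_other; apply: H; rewrite lt ltnSn.
have Hu : forall u, t0 <= u < t1 -> ~~ steps u p.
  by move=> u /andP[a b]; apply: H; rewrite a ltnW.
have [f1 f2] := IH lt Hu.
by rewrite e1 e2 f1 f2.
Qed.

Lemma step_self t p ev : choose t (sim t) = Some (p, ev) ->
  exists ms oq, out V run t = Some (p, (ms, oq)) /\
    cnq (scf (sim t.+1)) p = cnq (scf (sim t)) p + isSome oq /\
    cpend (scf (sim t.+1)) p = isSome oq.
Proof.
move=> E; have P0 := choose_pend E.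
rewrite outE /= /stepSS E; case: a_step => [[s' ms] oq] /=; rewrite !eqxx /=.
exists ms, oq; split => //; split; first by case: oq => [?|] /=; rewrite ?addn1 ?addn0.
by case: ev E P0 => [|s0 i0 q0 m0|] E P0 /=; rewrite ?P0.
Qed.

Lemma out_choose t p ms oq : out V run t = Some (p, (ms, oq)) ->
  exists ev, choose t (sim t) = Some (p, ev).
Proof.
rewrite outE /= /stepSS; case E: choose => [[q ev]|]; last by rewrite slog_none.
by case: a_step => [[s' ms'] oq'] /=; rewrite eqxx => -[<-]; exists ev.
Qed.

Lemma rm_src t c b : srm (sim t) c = Some b -> exists q, Queried V run c q b.
Proof.
elim: t => [//|t IH] /=; rewrite /stepSS.
case E: choose => [[p ev]|]; last exact: IH.
case Ha: a_step => [[s' ms] oq] /=.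
case Eo: (srm (sim t) c) => [b'|]; first by move=> [Eb]; apply: IH; rewrite Eo Eb.
case: oq Ha => [b0|] // Ha; case: eqP => // -> [<-].
exists p, t, ms; rewrite cfgE; split => //.
by rewrite outE /= /stepSS E Ha /= eqxx.
Qed.

Lemma dlv_mono t t' s i : t <= t' -> sdlv (sim t) s i -> sdlv (sim t') s i.
Proof.
move=> le; elim: t' le => [|t' IH]; first by rewrite leqn0 => /eqP->.
rewrite leq_eqVlt => /orP[/eqP->//|/IH H /H {}H] /=.
rewrite /stepSS; case: (choose t' _) => [[p ev]|] //.
by case: a_step => [[s' ms] oq] /=; case: ev => //= *; rewrite H orbT.
Qed.

Lemma dlv_set t p s i q m : choose t (sim t) = Some (p, EvMsg s i q m) -> sdlv (sim t.+1) s i.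
Proof. by move=> E /=; rewrite /stepSS E; case: a_step => [[s' ms] oq] /=; rewrite !eqxx. Qed.

Lemma dlv_src t s i : sdlv (sim t) s i ->
  exists t' p q m, t' < t /\ choose t' (sim t') = Some (p, EvMsg s i q m).
Proof.
elim: t => [//|t IH] /=; rewrite /stepSS.
case E: choose => [[p ev]|]; last by move=> /IH [t' [p [q [m [lt H]]]]]; exists t', p, q, m; rewrite ltnW.
case: a_step => [[s' ms] oq] /=.
have IH' : sdlv (sim t) s i -> exists t' p q m, t' < t.+1 /\ choose t' (sim t') = Some (p, EvMsg s i q m).
  by move=> /IH [t' [p' [q [m [lt H]]]]]; exists t', p', q, m; rewrite ltnW.
case: ev E => //= s0 i0 q0 m0 E; case/orP => // /andP[/eqP-> /eqP->].
by exists t, p, q0, m0.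
Qed.

Lemma steps_ev t p : steps t p -> exists ev, choose t (sim t) = Some (p, ev).
Proof. by rewrite /steps; case: choose => [[q ev]|] // /eqP->; exists ev. Qed.

Lemma first_step p t : (exists t', t <= t' /\ steps t' p) ->
  exists t1, [/\ t <= t1, steps t1 p & forall u, t <= u < t1 -> ~~ steps u p].
Proof.
move=> [t' [le st]].
have ex : exists u, (t <= u) && steps u p by exists t'; rewrite le st.
case: (ex_minnP ex) => t1 /andP[h1 h2] hmin; exists t1; split => // u /andP[a b].
apply/negP => Hs; have := hmin u; rewrite a Hs => /(_ isT).
by rewrite leqNgt b.
Qed.

Lemma choose_msg t p s i q m : choose t (sim t) = Some (p, EvMsg s i q m) ->
  [/\ s < t, ~~ sdlv (sim t) s i &
      exists ms oq, out V run s = Some (q, (ms, oq)) /\ onth ms i = Some (p, m)].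
Proof.
rewrite /choose; case: allowed => // -[Ep Ee].
have [_ kin nd [ms [oq [Hl Ho]]]] := chooseE_msg Ee.
rewrite keysL_mem /= in kin; case/andP: kin => lt _.
split => //; exists ms, oq; rewrite -Ep; split => //.
by rewrite -Hl slogE lt.
Qed.

Lemma count_lt (T : eqType) (P P' : pred T) (l : seq T) x : (forall y, P' y -> P y) -> x \in l -> P x -> ~~ P' x ->
  count P' l < count P l.
Proof.
move=> sub; elim: l => [//|y l IH]; rewrite inE => /orP[/eqP<-|xl] Px nPx /=.
  rewrite Px (negbTE nPx) add0n add1n ltnS; exact: sub_count.
have H := IH xl Px nPx; case Py': (P' y); first rewrite (sub y Py').
  by rewrite /= ltn_add2l.
by rewrite add0n; apply: leq_trans H (leq_addl _ _).
Qed.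

Lemma mkev_msg lg k p : rcvL lg k = Some p -> exists q m, mkev lg k = EvMsg k.1 k.2 q m.
Proof.
rewrite /rcvL /mkev /msgsL; case: (lg k.1) => [[q [ms oq]]|] /=; last by rewrite onth0n.
by case: onth => [[p0 m]|] // _; exists q, m.
Qed.

Variable F : failure_pattern n.
Hypothesis H1 : forall t, allowed t (stp t) -> stp t \notin F t.
Hypothesis H2 : forall p, correct F p -> forall t, exists t', t <= t' /\ steps t' p.

Lemma reliable s q ms oq i p m : out V run s = Some (q, (ms, oq)) -> onth ms i = Some (p, m) ->
  correct F p ->
  (exists t, sched run t = Some (p, EvMsg s i q m)) \/
  (exists t0, forall t, t0 <= t -> cpend (cfg V run t) p).
Proof.
move=> Eo Ei Hp.
case: (classic (exists t, sched run t = Some (p, EvMsg s i q m))) => Hd; [by left|right].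
apply: NNPP => Hnot.
have Hex t : exists t0, t <= t0 /\ ~~ cpend (scf (sim t0)) p.
  apply: NNPP => Hc; apply: Hnot; exists t => u Hu; rewrite cfgE.
  case E: (cpend _ p) => //; exfalso; apply: Hc; exists u; by rewrite E.
pose mu := (s, i).
pose L := keysL (out V run) s.+1.
have isz : i < size ms by rewrite -onthTE Ei.
have muL : mu \in L by rewrite keysL_mem /= ltnSn /msgsL Eo.
pose j := index mu L.
pose L' := take j.+1 L.
pose P t (k : nat * nat) := (rcvL (out V run) k == Some p) && ~~ sdlv (sim t) k.1 k.2.
pose N t := count (P t) L'.
have nd t : ~~ sdlv (sim t) s i.
  apply/negP => /dlv_src [t' [p' [q' [m' [_ E]]]]].
  have [_ _ [ms' [oq' [Eo' Ei']]]] := choose_msg E.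
  move: Eo'; rewrite Eo => -[Eq Ems _]; subst q' ms'; move: Ei'; rewrite Ei => -[Ep Em].
  subst p' m'; by apply: Hd; exists t'.
have Pmu t : P t mu by rewrite /P /= /rcvL /msgsL /= Eo Ei eqxx nd.
have jL0 : j < size L by rewrite index_mem.
have muL' : mu \in L' by rewrite /L' in_take_leq ?ltnSn.
have N1 t : 0 < N t by rewrite /N -has_count; apply/hasP; exists mu.
have Nmono t t' : t <= t' -> N t' <= N t.
  move=> le; apply: sub_count => k /andP[a b]; rewrite /P a /=.
  by apply/negP => /(dlv_mono le); apply/negP.
have Nstep t : s < t -> steps t p -> ~~ cpend (scf (sim t)) p -> N t.+1 < N t.
  move=> lt /steps_ev [ev E] np.
  move: (E); rewrite /choose; case: allowed => // -[Ep Ee].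
  rewrite Ep /chooseE (negbTE np) keys_sim in Ee.
  have eqP' : {in keysL (out V run) t, candP (slog (sim t)) (sdlv (sim t)) p =1 P t}.
    case=> s0 i0; rewrite keysL_mem /= => /andP[lt0 _].
    by rewrite /candP /P /rcvL /msgsL /= slogE lt0.
  rewrite (eq_in_has eqP') (eq_in_find eqP') in Ee.
  have [r Er] := keysL_pref (out V run) lt.
  rewrite -/L in Er.
  have hasF : has (P t) (keysL (out V run) t) by apply/hasP; exists mu; rewrite // Er mem_cat muL.
  rewrite hasF in Ee.
  set f := find (P t) _ in Ee.
  have fj : f <= j.
    rewrite leqNgt; apply/negP => lt'.
    have ie : index mu (keysL (out V run) t) = j by rewrite Er index_cat muL.
    have mK : mu \in keysL (out V run) t by rewrite Er mem_cat muL.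
    have := @before_find _ (0,0) (P t) (keysL (out V run) t) (index mu (keysL (out V run) t)).
    by rewrite nth_index // ie lt' Pmu => /(_ isT).
  have jL : j < size L by rewrite index_mem.
  have fL : f < size L by apply: leq_ltn_trans jL.
  set k := nth (0,0) _ f in Ee.
  have kL' : k \in L'.
    have -> : k = nth (0,0) L' f by rewrite /k Er nth_cat fL nth_take.
    by apply: mem_nth; rewrite size_takel.
  have Pk : P t k by rewrite /k; apply: nth_find.
  have Rk : rcvL (slog (sim t)) k = Some p.
    have : k \in keysL (out V run) t by rewrite /k mem_nth // -has_find.
    case/andP: Pk => /eqP Rk _.
    rewrite keysL_mem => /andP[lt0 _].
    by rewrite -Rk /rcvL /msgsL slogE lt0.
  have [q' [m' Hk]] := mkev_msg Rk.
  rewrite Hk in Ee; rewrite -Ee in E.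
  have D := dlv_set E.
  apply: (count_lt (x := k)) => //.
    move=> y /andP[a b]; rewrite /P a /=; apply/negP => /(dlv_mono (leqnSn t)).
    by apply/negP.
  by rewrite /P negb_and D orbT.
have main K : forall t, s < t -> N t <= K -> False.
  elim: K => [|K IH] t lt HN; first by move: (N1 t); rewrite lt0n -leqn0 HN.
  have [t0 [le0 np0]] := Hex t.
  have [t1 [le1 st1 nst]] := first_step (H2 Hp t0).
  have [_ e2] := nostep le1 nst.
  rewrite -e2 in np0.
  have lt1 : s < t1 by apply: leq_trans lt (leq_trans le0 le1).
  have := Nstep t1 lt1 st1 np0.
  have := Nmono t t1 (leq_trans le0 le1).
  move=> a b; apply: (IH t1.+1); first by apply: ltnW; rewrite ltnS.
  by rewrite -ltnS; apply: leq_trans b (leq_trans a HN).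
exact: (main (N s.+1) s.+1).
Qed.

Lemma cons_ok (W : 'I_n -> bool) q b : W q = b -> kTAg n n F W b.
Proof.
rewrite /kTAg => Wq; case: ifP => [Hc|_].
  case: b Wq => // Wq; exfalso.
  have := cardsC [set p | ~~ W p]; rewrite card_ord.
  have : 0 < #|~: [set p | ~~ W p]| by apply/card_gt0P; exists q; rewrite !inE Wq.
  move: Hc; lia.
case: ifP => // /andP[/forallP Hall _].
by case: b Wq => // Wq; move: (Hall q); rewrite Wq.
Qed.

Lemma adm : Admissible V run F (kTAg n n) (n - 1).
Proof.
split; [|split;[|split;[|split;[|split;[|split;[|split]]]]]].
- move=> t p ev /=; rewrite /choose; case: ifP => // Hal [<- _]; exact: H1.
- by move=> t p ev /= E; rewrite cfgE; exact: choose_pend E.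
- move=> t p s i q m /= E; have [lt _ H] := choose_msg E; by split.
- move=> t t' p p' s i q q' m m' /= E E'.
  have [_ n1 _] := choose_msg E; have [_ n2 _] := choose_msg E'.
  case: (ltngtP t t') => // lt; exfalso.
    by move: n2; rewrite (dlv_mono lt (dlv_set E)).
  by move: n1; rewrite (dlv_mono lt (dlv_set E')).
- move=> c [p [t [/= E Ec]]] W HW.
  have Hp := choose_pend E; rewrite /= in Hp.
  have [b Hb] := pend_inv Hp.
  rewrite cfgE in Ec; rewrite Ec /= in Hb.
  rewrite /= (finrespE Hb).
  have [q Hq] := rm_src Hb.
  exact: (cons_ok (HW q b Hq)).
- move=> p Hp t _; have [t' [le st]] := H2 Hp t.
  have [ev E] := steps_ev st; by exists t', ev.
- move=> s q ms oq i p m Eo Ei Hp; exact: reliable Eo Ei Hp.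
- move=> c _ p Hp [b [t [ms [Eo Ec]]]].
  have [ev E] := out_choose Eo.
  have [ms' [oq' [Eo' [e1 e2]]]] := step_self E.
  move: Eo'; rewrite Eo => -[_ Eoq]; rewrite -Eoq /= in e1 e2.
  have [t1 [le1 st1 nst]] := first_step (H2 Hp t.+1).
  have [f1 f2] := nostep le1 nst.
  have [ev1 E1] := steps_ev st1.
  have := choose_pend E1; rewrite f2 e2 /=.
  case: ev1 E1 => // E1 _; exists t1; split => //.
  by rewrite cfgE f1 e1 -cfgE Ec addn1.
Qed.
End Sim.

Definition agree n (A : Algo n) (S : {set 'I_n}) (σ1 σ2 : SS A) :=
  [/\ cnq (scf σ1) = cnq (scf σ2), cpend (scf σ1) = cpend (scf σ2),
      slog σ1 = slog σ2, sdlv σ1 = sdlv σ2 &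
      srm σ1 = srm σ2 /\ forall p, p \notin S -> cst (scf σ1) p = cst (scf σ2) p].

Lemma agree_step n (A : Algo n) (S : {set 'I_n}) T (Hn : 0 < n) t (σ1 σ2 : SS A) : t < T -> agree S σ1 σ2 ->
  agree S (stepSS S None Hn t σ1) (stepSS S (Some T) Hn t σ2).
Proof.
move=> lt [e1 e2 e3 e4 [e5 e6]].
have Ech : choose S None Hn t σ1 = choose S (Some T) Hn t σ2.
  by rewrite /choose /allowed (leqNgt T t) lt !orbF e2 e3 e4.
rewrite /stepSS -Ech.
case E: choose => [[p ev]|]; last by split.
have HpS : p \notin S.
  by move: E; rewrite /choose /allowed orbF; case: ifP => // H [<- _].
have Hin : input_of (dummyR σ1) (scf σ1) p ev = input_of (dummyR σ2) (scf σ2) p ev.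
  by case: ev E => // E; rewrite /input_of /dummyR e1 e5.
rewrite (e6 p HpS) Hin.
case: a_step => [[s' ms] oq].
rewrite e1 e2 e3 e4 e5; split => //; split => // q Hq /=.
by case: eqP => // _; apply: e6.
Qed.

Lemma agree_sim n (A : Algo n) (S : {set 'I_n}) T (Hn : 0 < n) (V0 V1 : 'I_n -> bool) :
  (forall p, p \notin S -> V0 p = V1 p) ->
  forall t, t <= T -> agree S (sim A V0 S None Hn t) (sim A V1 S (Some T) Hn t).
Proof.
move=> HV; elim=> [|t IH] le.
  by split => //; split => // p Hp /=; rewrite HV.
exact: agree_step le (IH (ltnW le)).
Qed.

Lemma steps_at n (A : Algo n) V (S : {set 'I_n}) T0 (Hn : 0 < n) t p :
  allowed S T0 t p -> stp Hn t = p -> steps A V S T0 Hn t p.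
Proof. by move=> Ha Hs; rewrite /steps /choose Hs Ha eqxx. Qed.

Lemma stp_at n (Hn : 0 < n) t (p : 'I_n) : stp Hn (t * n + p) = p.
Proof. by apply: val_inj => /=; rewrite modnMDl modn_small. Qed.

Lemma le_at n (Hn : 0 < n) t (p : 'I_n) : t <= t * n + p.
Proof. by apply: leq_trans (leq_addr _ _); rewrite leq_pmulr. Qed.

Lemma card_lt n k (kn : k <= n) : #|[set p : 'I_n | p < k]| = k.
Proof.
have -> : [set p : 'I_n | p < k] = [set widen_ord kn i | i : 'I_k].
  apply/setP => p; rewrite inE; apply/idP/imsetP => [lt|[i _ ->]] /=; last exact: ltn_ord.
  by exists (Ordinal lt) => //; apply: val_inj.
rewrite card_imset ?cardsT ?card_ord //.
by move=> a b /(congr1 val) /= /val_inj.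
Qed.

Lemma faulty_const n (X : {set 'I_n}) : faulty (fun _ : nat => X) = X.
Proof.
apply/setP => p; rewrite inE; apply/asboolP/idP => [[t]//|H]; by exists 0.
Qed.

Lemma mono_red n f k : f <= n - 1 ->
  Creducible (kTAg_task n f k) (ConsT n f) -> Creducible (kTAg_task n f k) (ConsT n (n - 1)).
Proof.
move=> fn [A HA]; exists A => F Hok Hf V R Had; apply: HA => //.
case: Had => [a1 [a2 [a3 [a4 [a5 [a6 [a7 a8]]]]]]].
do 7 (split; first by []).
move=> c Hc; apply: a8; apply: leq_trans Hc; rewrite /=.
by apply: leq_sub2l.
Qed.

Theorem mainTheorem9 :
  forall n f k : nat, 1 <= k -> k <= f -> f <= n - 1 ->
    ~ Creducible (kTAg_task n f k) (ConsT n (n - 1)) /\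
    ~ Creducible (kTAg_task n f k) (ConsT n f).
Proof.
move=> n f k hk kf fn.
suff P1 : ~ Creducible (kTAg_task n f k) (ConsT n (n - 1)).
  by split => // /(mono_red fn).
move=> [A HA].
have Hn : 0 < n by lia.
have kn : k <= n by lia.
pose S := [set p : 'I_n | p < k].
have cS : #|S| = k by exact: card_lt.
pose V0 := fun p : 'I_n => p \notin S.
pose V1 := fun _ : 'I_n => true.
pose F0 := fun _ : nat => S.
pose F1 := fun _ : nat => (set0 : {set 'I_n}).
have lt0 : n - 1 < n by lia.
pose p0 := Ordinal lt0.
have p0S : p0 \notin S by rewrite inE /= -leqNgt; lia.
have fF0 : faulty F0 = S by exact: faulty_const.
have fF1 : faulty F1 = set0 by exact: faulty_const.
pose R0 := run A V0 S None Hn.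
have Ad0 : Admissible V0 R0 F0 (ConsT n (n - 1)).1 (ConsT n (n - 1)).2.
  apply: adm.
    by move=> t; rewrite /allowed orbF.
  move=> p; rewrite /correct fF0 => Hp t.
  exists (t * n + p); split; first exact: le_at.
  by apply: steps_at; rewrite ?stp_at // /allowed Hp.
have [Ht0 [_ [_ Hv0]]] := HA F0 (fun t t' _ => subxx _) ltac:(by rewrite fF0 cS) V0 R0 Ad0.
have [t [d Hd]] := Ht0 p0 ltac:(by rewrite /correct fF0).
have := Hv0 _ _ _ Hd; rewrite /= /kTAg.
have -> : [set p | ~~ V0 p] = S by apply/setP => p; rewrite inE /V0 negbK.
rewrite cS leqnn => Ed; subst d.
pose R1 := run A V1 S (Some t) Hn.
have Ad1 : Admissible V1 R1 F1 (ConsT n (n - 1)).1 (ConsT n (n - 1)).2.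
  apply: adm.
    by move=> t' _; rewrite inE.
  move=> p _ t'.
  exists (maxn t' t * n + p); split.
    exact: leq_trans (leq_maxl t' t) (le_at Hn _ _).
  apply: steps_at; rewrite ?stp_at // /allowed.
  by rewrite (leq_trans (leq_maxr t' t) (le_at Hn _ _)) orbT.
have [_ [_ [_ Hv1]]] := HA F1 (fun t t' _ => subxx _) ltac:(by rewrite fF1 cards0) V1 R1 Ad1.
have Hd1 : dec_at V1 R1 t p0 = Some false.
  rewrite -Hd /dec_at /R0 /R1 !cfgE.
  have HV : forall p, p \notin S -> V0 p = V1 p by move=> p Hp; rewrite /V0 Hp.
  have [_ _ _ _ [_ e6]] := @agree_sim n A S t Hn V0 V1 HV t (leqnn t).
  by rewrite e6.
have := Hv1 _ _ _ Hd1; rewrite /= /kTAg.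
have -> : [set p | ~~ V1 p] = set0 by apply/setP => p; rewrite !inE.
rewrite cards0 leqNgt hk /= fF1 cards0 /=.
by have -> : [forall p, V1 p] by apply/forallP.
Qed.
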